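(* Let $n\ge 2$, $R>1$, $a=6R$, and let $u'':[1,a]\to[0,\infty)$ satisfy $u''<R$. Let $f_t(x)$, $x\in[1,a]$, evolve by $$\dot f=u''(x)\left(\frac{f''}{1+f'^2}+(n-1)\frac{xf'-f}{x^2+f^2}\right)$$ with fixed boundary values. Then for $y_0$ sufficiently negative the following holds: if the graph of $f_0$ does not intersect the ball $B_R(3R,y_0)$, then the family of shrinking balls $B_{\sqrt{R^2-4Rt}}(3R,y_0)$ does not intersect the graphs of $f_t$, as long as the flow is defined (and $t<R/4$).
   Context: Here $u''$ is the second $\rho$-derivative of the potential $u(\rho)$ of a Calabi-symmetric K\''ahler form $\omega=i\partial\bar\partial u$ on the blowup of $\mathbb{P}^n$ at a point in the class $a[H]-[E]$, regarded as a function of the Legendre coordinate $x=u'(\rho)\in[1,a]$. *)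

(* Defs.v *)
From Stdlib Require Import Reals Lra.
From Coquelicot Require Import Coquelicot.
Open Scope R_scope.

Definition cont_on_strip (f : R -> R -> R) (T a : R) : Prop :=
  forall t x, 0 <= t < T -> 1 <= x <= a ->
  forall eps, 0 < eps -> exists del, 0 < del /\
    forall s y, 0 <= s < T -> 1 <= y <= a ->
      Rabs (s - t) < del -> Rabs (y - x) < del ->
      Rabs (f s y - f t x) < eps.

Definition is_flow (n : nat) (a : R) (upp : R -> R) (f : R -> R -> R) (T : R)
  : Prop :=
  cont_on_strip f T a /\
  (forall t, 0 <= t < T -> f t 1 = f 0 1 /\ f t a = f 0 a) /\
  exists ft fx fxx : R -> R -> R,
    forall t x, 0 < t < T -> 1 < x < a ->
      is_derive (fun s => f s x) t (ft t x) /\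
      is_derive (f t) x (fx t x) /\
      is_derive (fx t) x (fxx t x) /\
      ft t x = upp x * (fxx t x / (1 + (fx t x) ^ 2)
                 + (INR n - 1) * (x * fx t x - f t x) / (x ^ 2 + (f t x) ^ 2)).

Definition in_ball (r cx cy x y : R) : Prop :=
  (x - cx) ^ 2 + (y - cy) ^ 2 < r ^ 2.

(* Main.v *)
Require Import Defs.
From Stdlib Require Import Reals Lra Classical.
From Coquelicot Require Import Coquelicot.
Open Scope R_scope.

Lemma sign_near h c l : derivable_pt_lim h c l -> l <> 0 ->
  exists del, 0 < del /\ forall k, 0 < k < del ->
   (0 < l -> h (c - k) < h c /\ h c < h (c + k)) /\
   (l < 0 -> h (c + k) < h c /\ h c < h (c - k)).
Proof.
  intros H Hl.
  assert (Hl' : 0 < Rabs l / 2) by (apply Rabs_pos_lt in Hl; lra).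
  destruct (H _ Hl') as [dl Hdl].
  exists dl. split; [apply cond_pos|]. intros k Hk.
  assert (H1 := Hdl k ltac:(lra) ltac:(rewrite Rabs_right; lra)).
  assert (H2 := Hdl (-k) ltac:(lra) ltac:(rewrite Rabs_left; lra)).
  apply Rabs_def2 in H1. apply Rabs_def2 in H2.
  set (q1 := (h (c + k) - h c) / k) in *.
  set (q2 := (h (c + - k) - h c) / - k) in *.
  assert (E1 : h (c + k) - h c = q1 * k) by (unfold q1; field; lra).
  assert (E2 : h (c + - k) - h c = q2 * - k) by (unfold q2; field; lra).
  replace (c - k) with (c + - k) by ring.
  split; intros Hs.
  - rewrite Rabs_right in H1, H2 by lra. split; nra.
  - rewrite Rabs_left in H1, H2 by lra. split; nra.
Qed.

Lemma lub_approx (E : R -> Prop) m b : is_lub E m -> b < m -> exists y, E y /\ b < y.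
Proof.
  intros [Hu Hl] Hb. apply NNPP. intro Hn.
  assert (is_upper_bound E b).
  { intros y Ey. apply Rnot_lt_le. intro. apply Hn. exists y. split; auto. }
  specialize (Hl _ H). lra.
Qed.

Lemma prod_bound v k e : 0 < e -> Rabs v < 1 -> Rabs v < e / (3 * (2 * Rabs k + 1)) ->
  Rabs (v * (v + 2 * k)) < e / 3.
Proof.
  intros He H1 H2. rewrite Rabs_mult.
  assert (Ht : Rabs (v + 2 * k) <= Rabs v + 2 * Rabs k).
  { eapply Rle_trans. apply Rabs_triang. rewrite Rabs_mult, (Rabs_right 2) by lra. lra. }
  pose proof (Rabs_pos v). pose proof (Rabs_pos k). pose proof (Rabs_pos (v + 2 * k)).
  set (z := e / (3 * (2 * Rabs k + 1))) in *.
  assert (Ez : z * (3 * (2 * Rabs k + 1)) = e) by (unfold z; field; lra).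
  nra.
Qed.

Lemma cont_G (f : R -> R -> R) T a c d A B :
  cont_on_strip f T a ->
  cont_on_strip (fun s y => (y - c) ^ 2 + (f s y - d) ^ 2 - (A - B * s)) T a.
Proof.
  intros Hf t x Ht Hx e He.
  set (K := f t x - d).
  assert (P1 : 0 < Rmin 1 (e / (3 * (2 * Rabs K + 1)))).
  { apply Rmin_pos; [lra|]. pose proof (Rabs_pos K).
    apply Rdiv_lt_0_compat; lra. }
  destruct (Hf t x Ht Hx _ P1) as [d1 [Hd1 Hd1']].
  pose proof (Rabs_pos (x - c)). pose proof (Rabs_pos B).
  exists (Rmin (Rmin 1 d1) (Rmin (e / (3 * (2 * Rabs (x - c) + 1))) (e / (3 * (Rabs B + 1))))).
  split.
  { repeat apply Rmin_pos; try lra; apply Rdiv_lt_0_compat; lra. }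
  intros s y Hs Hy Hst Hyx.
  assert (Hu := Hd1' s y Hs Hy ltac:(eapply Rlt_le_trans; [exact Hst|];
     eapply Rle_trans; [apply Rmin_l|]; apply Rmin_r)
     ltac:(eapply Rlt_le_trans; [exact Hyx|];
     eapply Rle_trans; [apply Rmin_l|]; apply Rmin_r)).
  cbv beta. unfold K.
  set (u := f s y - f t x) in *.
  set (v := y - x) in *. set (w := s - t) in *.
  replace ((y - c) ^ 2 + (f s y - d) ^ 2 - (A - B * s) -
      ((x - c) ^ 2 + (f t x - d) ^ 2 - (A - B * t)))
    with (v * (v + 2 * (x - c)) + u * (u + 2 * K) + B * w)
    by (unfold u, v, w, K; ring).
  assert (T1 : Rabs (v * (v + 2 * (x - c))) < e / 3).
  { apply prod_bound; auto.
    - eapply Rlt_le_trans; [exact Hyx|]. eapply Rle_trans; apply Rmin_l.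
    - eapply Rlt_le_trans; [exact Hyx|]. eapply Rle_trans; [apply Rmin_r|]. apply Rmin_l. }
  assert (T2 : Rabs (u * (u + 2 * K)) < e / 3).
  { apply prod_bound; auto.
    - eapply Rlt_le_trans; [exact Hu|]. apply Rmin_l.
    - eapply Rlt_le_trans; [exact Hu|]. apply Rmin_r. }
  assert (T3 : Rabs (B * w) < e / 3).
  { rewrite Rabs_mult.
    assert (Hw : Rabs w < e / (3 * (Rabs B + 1))).
    { eapply Rlt_le_trans; [exact Hst|]. eapply Rle_trans; apply Rmin_r. }
    pose proof (Rabs_pos w).
    set (z := e / (3 * (Rabs B + 1))) in *.
    assert (Ez : z * (3 * (Rabs B + 1)) = e) by (unfold z; field; lra).
    nra. }
  eapply Rle_lt_trans. apply Rabs_triang.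
  eapply Rle_lt_trans. apply Rplus_le_compat_r. apply Rabs_triang. lra.
Qed.

Lemma tube (H : R -> R -> R) T a t : 1 <= a -> cont_on_strip H T a -> 0 <= t < T ->
  (forall y, 1 <= y <= a -> H t y > 0) ->
  exists del, 0 < del /\ forall s y, 0 <= s < T -> 1 <= y <= a -> Rabs (s - t) < del -> H s y > 0.
Proof.
  intros Ha Hc Ht Hp.
  assert (LP : forall y, 1 <= y <= a -> exists del, 0 < del /\ forall s z, 0 <= s < T -> 1 <= z <= a ->
     Rabs (s - t) < del -> Rabs (z - y) < del -> H s z > 0).
  { intros y Hy. destruct (Hc t y Ht Hy (H t y) (Hp y Hy)) as [d [Hd Hd']].
    exists d. split; auto. intros s z Hs Hz H1 H2. specialize (Hd' s z Hs Hz H1 H2).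
    apply Rabs_def2 in Hd'. lra. }
  set (Q := fun y => 1 <= y <= a /\ exists del, 0 < del /\ forall s z, 0 <= s < T -> 1 <= z <= y ->
     Rabs (s - t) < del -> H s z > 0).
  assert (Q1 : Q 1).
  { split; [lra|]. destruct (LP 1 ltac:(lra)) as [d [Hd Hd']]. exists d. split; auto.
    intros s z Hs Hz H1. apply Hd'; auto; try lra. replace (z - 1) with 0 by lra.
    rewrite Rabs_R0; lra. }
  destruct (completeness Q) as [ys Hys].
  { exists a. intros y [Hy _]. lra. }
  { exists 1; exact Q1. }
  assert (Hys1 : 1 <= ys) by (apply (proj1 Hys); exact Q1).
  assert (Hysa : ys <= a) by (apply (proj2 Hys); intros y [Hy _]; lra).
  destruct (LP ys ltac:(lra)) as [d' [Hd' Hd'']].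
  destruct (lub_approx Q ys (ys - d') Hys ltac:(lra)) as [y [[Hy [dy [Hdy Hdy']]] Hyy]].
  assert (Hyys : y <= ys) by (apply (proj1 Hys); split; auto; exists dy; auto).
  set (y2 := Rmin a (ys + d' / 2)).
  assert (Q2 : Q y2).
  { split. { unfold y2. split; [apply Rmin_glb; lra | apply Rmin_l]. }
    exists (Rmin dy d'). split; [apply Rmin_pos; lra|].
    intros s z Hs Hz Hst.
    assert (Hz2 : z <= ys + d' / 2) by (eapply Rle_trans; [apply Hz | apply Rmin_r]).
    assert (Hza : z <= a) by (eapply Rle_trans; [apply Hz | apply Rmin_l]).
    destruct (Rle_dec z y).
    - apply Hdy'; auto; try lra. eapply Rlt_le_trans; [exact Hst | apply Rmin_l].
    - apply Hd''; auto; try lra.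
      + eapply Rlt_le_trans; [exact Hst | apply Rmin_r].
      + apply Rabs_def1; lra. }
  assert (Hy2 : y2 <= ys) by (apply (proj1 Hys); exact Q2).
  destruct (Rle_dec a (ys + d' / 2)) as [Hle|Hlt].
  - assert (E : y2 = a) by (unfold y2; apply Rmin_left; lra).
    rewrite E in Q2. unfold Q in Q2. destruct Q2 as [_ [d [Hd Hd2]]]. exists d. split; [exact Hd|].
    intros s z Hs Hz Hst. apply Hd2; auto.
  - assert (E : y2 = ys + d' / 2) by (unfold y2; apply Rmin_right; lra). lra.
Qed.

Lemma dg (h : R -> R) x dh c d K : is_derive h x dh ->
  is_derive (fun y => (y - c)^2 + (h y - d)^2 - K) x (2*(x-c) + 2*(h x - d)*dh).
Proof. intros H. auto_derive. exists dh; exact H.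
replace (Derive (fun x0 => h x0) x) with dh by (symmetry; apply is_derive_unique; exact H). ring. Qed.
Lemma dgp (h k : R -> R) x dh dk c d : is_derive h x dh -> is_derive k x dk ->
  is_derive (fun y => 2*(y - c) + 2*(h y - d)* k y) x (2 + 2*(dh * k x + (h x - d)*dk)).
Proof. intros H1 H2. auto_derive. repeat split; [exists dh; exact H1| exists dk; exact H2].
replace (Derive (fun x0 => h x0) x) with dh by (symmetry; apply is_derive_unique; exact H1).
replace (Derive (fun x0 => k x0) x) with dk by (symmetry; apply is_derive_unique; exact H2). ring. Qed.
Lemma dt (h : R -> R) x dh c d A B : is_derive h x dh ->
  is_derive (fun s => c + (h s - d)^2 - (A - B*s)) x (2*(h x - d)*dh + B).
Proof. intros H. auto_derive. exists dh; exact H.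
replace (Derive (fun x0 => h x0) x) with dh by (symmetry; apply is_derive_unique; exact H). ring. Qed.

Lemma key (n : nat) (Rr : R) (upp : R -> R) (y0 : R) (f : R -> R -> R) (T eps : R) :
  1 < Rr -> 1 <= INR n - 1 ->
  (forall x, 1 <= x <= 6 * Rr -> 0 <= upp x /\ upp x < Rr) ->
  y0 <= - ((INR n - 1) * (6 * Rr ^ 2 + Rr) + 1 + Rr) ->
  is_flow n (6 * Rr) upp f T ->
  (forall x, 1 <= x <= 6 * Rr -> ~ in_ball Rr (3 * Rr) y0 x (f 0 x)) ->
  0 < eps ->
  forall t x, 0 <= t < T -> 1 <= x <= 6 * Rr ->
    0 <= (x - 3 * Rr) ^ 2 + (f t x - y0) ^ 2 - ((Rr ^ 2 - eps) - (4 * Rr + eps) * t).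
Proof.
  intros HR Hn Hupp Hy0 [Hcont [Hbd [ft [fx [fxx Hpde]]]]] Hinit Heps t0 x0 Ht0 Hx0.
  set (G := fun s y => (y - 3 * Rr) ^ 2 + (f s y - y0) ^ 2 - ((Rr ^ 2 - eps) - (4 * Rr + eps) * s)).
  change (0 <= G t0 x0).
  apply Rnot_lt_le. intro HG0.
  assert (Gc : cont_on_strip G T (6 * Rr)) by (apply cont_G; exact Hcont).
  assert (Ginit : forall y, 1 <= y <= 6 * Rr -> eps <= G 0 y).
  { intros y Hy. specialize (Hinit y Hy). unfold in_ball in Hinit. unfold G. lra. }
  assert (Gend : forall s y, 0 <= s -> (y = 1 \/ y = 6 * Rr) -> 0 < G s y).
  { intros s y Hs Hy. unfold G. pose proof (pow2_ge_0 (f s y - y0)).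
    assert (Hsq : 4 * Rr ^ 2 < (y - 3 * Rr) ^ 2) by (destruct Hy; subst; nra). nra. }
  set (P := fun s => 0 <= s <= t0 /\ forall tau y, 0 <= tau <= s -> 1 <= y <= 6 * Rr -> G tau y > 0).
  assert (P0 : P 0).
  { split; [lra|]. intros tau y Htau Hy. replace tau with 0 by lra. specialize (Ginit y Hy). lra. }
  destruct (completeness P) as [ts Hts].
  { exists t0. intros s [Hs _]. lra. }
  { exists 0. exact P0. }
  assert (Hts0 : 0 <= ts) by (apply (proj1 Hts); exact P0).
  assert (Hts1 : ts <= t0) by (apply (proj2 Hts); intros s [Hs _]; lra).
  assert (Ha : forall tau y, 0 <= tau < ts -> 1 <= y <= 6 * Rr -> G tau y > 0).
  { intros tau y Htau Hy. destruct (lub_approx P ts tau Hts ltac:(lra)) as [s [[Hs Hs'] Hts']].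
    apply Hs'; auto; lra. }
  assert (Hb : forall y, 1 <= y <= 6 * Rr -> 0 <= G ts y).
  { intros y Hy. apply Rnot_lt_le. intro Hneg.
    destruct (Req_dec ts 0) as [E|E].
    { rewrite E in Hneg. specialize (Ginit y Hy). lra. }
    destruct (Gc ts y ltac:(lra) Hy (- G ts y) ltac:(lra)) as [d [Hd Hd']].
    set (tau := Rmax 0 (ts - d / 2)).
    assert (Htau : 0 <= tau < ts).
    { unfold tau. split; [apply Rmax_l|]. apply Rmax_lub_lt; lra. }
    assert (Htau2 : ts - d / 2 <= tau) by apply Rmax_r.
    specialize (Hd' tau y ltac:(lra) Hy ltac:(apply Rabs_def1; lra)
      ltac:(replace (y - y) with 0 by ring; rewrite Rabs_R0; lra)).
    apply Rabs_def2 in Hd'. specialize (Ha tau y Htau Hy). lra. }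
  assert (Hc : exists y, 1 <= y <= 6 * Rr /\ G ts y <= 0).
  { apply NNPP. intro Hn'.
    assert (Hpos : forall y, 1 <= y <= 6 * Rr -> G ts y > 0).
    { intros y Hy. apply Rnot_le_lt. intro. apply Hn'. exists y. auto. }
    destruct (tube G T (6 * Rr) ts ltac:(lra) Gc ltac:(lra) Hpos) as [d [Hd Hd']].
    set (s1 := Rmin t0 (ts + d / 2)).
    assert (Ps1 : P s1).
    { split. { unfold s1. split; [apply Rmin_glb; lra| apply Rmin_l]. }
      intros tau y Htau Hy.
      assert (Htau1 : tau <= t0) by (eapply Rle_trans; [apply Htau| apply Rmin_l]).
      assert (Htau2 : tau <= ts + d / 2) by (eapply Rle_trans; [apply Htau| apply Rmin_r]).
      destruct (Rlt_dec tau ts).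
      - apply Ha; auto; lra.
      - apply Hd'; auto; try lra. apply Rabs_def1; lra. }
    assert (Hs1 : s1 <= ts) by (apply (proj1 Hts); exact Ps1).
    destruct (Rle_dec t0 (ts + d / 2)).
    - assert (E : s1 = t0) by (unfold s1; apply Rmin_left; lra).
      rewrite E in Ps1. destruct Ps1 as [_ Ps1]. specialize (Ps1 t0 x0 ltac:(lra) Hx0). lra.
    - assert (E : s1 = ts + d / 2) by (unfold s1; apply Rmin_right; lra). lra. }
  destruct Hc as [xs [Hxs HGxs]].
  assert (HG0s : G ts xs = 0) by (specialize (Hb xs Hxs); lra).
  assert (Hxs1 : 1 < xs < 6 * Rr).
  { split; apply Rnot_le_lt; intro; [assert (xs = 1) by lra | assert (xs = 6 * Rr) by lra];
    assert (0 < G ts xs) by (apply Gend; auto); lra. }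
  assert (Hts2 : 0 < ts).
  { destruct (Req_dec ts 0) as [E|E]; [|lra]. rewrite E in HG0s. specialize (Ginit xs Hxs). lra. }
  destruct (Hpde ts xs ltac:(lra) Hxs1) as [Dt [Dx [Dxx Heq]]].
  set (F := f ts xs) in *. set (p := fx ts xs) in *. set (q := fxx ts xs) in *. set (v := ft ts xs) in *.
  assert (Htime : 2 * (F - y0) * v + (4 * Rr + eps) <= 0).
  { apply Rnot_lt_le. intro Hpos.
    assert (D := dt (fun s => f s xs) ts v ((xs - 3 * Rr) ^ 2) y0 (Rr ^ 2 - eps) (4 * Rr + eps) Dt).
    apply is_derive_Reals in D. fold F in D.
    destruct (sign_near _ _ _ D ltac:(lra)) as [d [Hd Hd']].
    set (k := Rmin d ts / 2).
    pose proof (Rmin_l d ts). pose proof (Rmin_r d ts). pose proof (Rmin_pos d ts Hd Hts2).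
    assert (Hk : 0 < k < d) by (unfold k; lra).
    assert (Hk2 : k < ts) by (unfold k; lra).
    destruct (Hd' k Hk) as [Hd1 _]. destruct (Hd1 Hpos) as [Hlt _].
    assert (Hg := Ha (ts - k) xs ltac:(lra) Hxs).
    unfold G in Hg, HG0s. simpl in Hlt. lra. }
  assert (Dg : forall y, 1 < y < 6 * Rr -> derivable_pt_lim (G ts) y
     (2 * (y - 3 * Rr) + 2 * (f ts y - y0) * fx ts y)).
  { intros y Hy. destruct (Hpde ts y ltac:(lra) Hy) as [_ [Dy _]].
    apply is_derive_Reals. exact (dg (f ts) y _ (3 * Rr) y0 _ Dy). }
  assert (Hfirst : 2 * (xs - 3 * Rr) + 2 * (F - y0) * p = 0).
  { destruct (Req_dec (2 * (xs - 3 * Rr) + 2 * (F - y0) * p) 0) as [E|E]; [exact E|].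
    exfalso.
    destruct (sign_near _ _ _ (Dg xs Hxs1) E) as [d [Hd Hd']].
    set (k := Rmin d (Rmin (xs - 1) (6 * Rr - xs)) / 2).
    assert (Hm : 0 < Rmin d (Rmin (xs - 1) (6 * Rr - xs))) by (repeat apply Rmin_pos; lra).
    pose proof (Rmin_l d (Rmin (xs - 1) (6 * Rr - xs))).
    pose proof (Rmin_r d (Rmin (xs - 1) (6 * Rr - xs))).
    pose proof (Rmin_l (xs - 1) (6 * Rr - xs)). pose proof (Rmin_r (xs - 1) (6 * Rr - xs)).
    destruct (Hd' k ltac:(unfold k; lra)) as [J1 J2]. fold F in J1. fold F in J2. fold p in J1. fold p in J2.
    assert (B1 := Hb (xs - k) ltac:(unfold k; lra)).
    assert (B2 := Hb (xs + k) ltac:(unfold k; lra)).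
    destruct (Rlt_dec 0 (2 * (xs - 3 * Rr) + 2 * (F - y0) * p)).
    - destruct (J1 r). lra.
    - destruct (J2 ltac:(lra)). lra. }
  assert (Hsecond : 0 <= 2 + 2 * (p * p + (F - y0) * q)).
  { apply Rnot_lt_le. intro Hneg.
    assert (D := dgp (f ts) (fx ts) xs p q (3 * Rr) y0 Dx Dxx).
    apply is_derive_Reals in D. fold F in D. fold p in D.
    destruct (sign_near _ _ _ D ltac:(lra)) as [d [Hd Hd']].
    set (k := Rmin d (6 * Rr - xs) / 2).
    assert (Hm : 0 < Rmin d (6 * Rr - xs)) by (apply Rmin_pos; lra).
    pose proof (Rmin_l d (6 * Rr - xs)). pose proof (Rmin_r d (6 * Rr - xs)).
    destruct (MVT_cor2 (G ts) (fun y => 2 * (y - 3 * Rr) + 2 * (f ts y - y0) * fx ts y)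
      xs (xs + k) ltac:(unfold k; lra)) as [cc [Hmvt Hcc]].
    { intros cc Hcc. apply Dg. unfold k in Hcc. lra. }
    destruct (Hd' (cc - xs) ltac:(unfold k in Hcc; lra)) as [_ J2].
    destruct (J2 Hneg) as [J3 _].
    replace (xs + (cc - xs)) with cc in J3 by ring.
    fold F in J3. fold p in J3. rewrite Hfirst in J3.
    assert (B1 := Hb (xs + k) ltac:(unfold k; lra)).
    rewrite HG0s in Hmvt. nra. }
  unfold G in HG0s. fold F in HG0s.
  destruct (Hupp xs ltac:(lra)) as [Hu0 Hu1].
  set (u := upp xs) in *. set (N := INR n - 1) in *.
  set (X := xs - 3 * Rr) in *. set (D := F - y0) in *.
  set (M := N * (6 * Rr ^ 2 + Rr) + 1) in *.
  assert (HX2 : X ^ 2 + D ^ 2 <= Rr ^ 2) by nra.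
  assert (HXle : X <= Rr) by nra.
  assert (HDge : - Rr <= D) by nra.
  assert (HM : 1 <= M) by (unfold M; nra).
  assert (HDle : D <= Rr) by nra.
  assert (HF : F <= - M) by (unfold D in HDle; lra).
  assert (Hw : 0 < 1 + p ^ 2) by nra.
  assert (HW : 0 < xs ^ 2 + F ^ 2) by nra.
  set (a1 := q / (1 + p ^ 2)) in *.
  set (a2 := N * (xs * p - F) / (xs ^ 2 + F ^ 2)) in *.
  assert (A1 : -1 <= D * a1).
  { assert (0 <= (D * q + (1 + p ^ 2)) * / (1 + p ^ 2)).
    { apply Rmult_le_pos; [nra| left; apply Rinv_0_lt_compat; lra]. }
    replace ((D * q + (1 + p ^ 2)) * / (1 + p ^ 2)) with (D * a1 + 1) in H by (unfold a1; field; lra).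
    lra. }
  assert (K1 : X * xs <= Rr * xs) by nra.
  assert (K2 : (D + Rr) * F <= 0) by nra.
  assert (K3 : M * (- F) <= F ^ 2) by nra.
  assert (K4 : N * (6 * Rr ^ 2) <= N * (6 * Rr ^ 2) * (- F)).
  { assert (0 <= N * (6 * Rr ^ 2)) by nra. nra. }
  assert (Key : N * (xs * X + D * F) <= xs ^ 2 + F ^ 2).
  { assert (xs * X + D * F <= 6 * Rr ^ 2 + Rr * (- F)) by nra.
    assert (N * (xs * X + D * F) <= N * (6 * Rr ^ 2 + Rr * (- F))) by nra.
    unfold M in K3. nra. }
  assert (A2 : -1 <= D * a2).
  { assert (0 <= (xs ^ 2 + F ^ 2 - N * (xs * X + D * F)) * / (xs ^ 2 + F ^ 2)).
    { apply Rmult_le_pos; [lra| left; apply Rinv_0_lt_compat; lra]. }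
    assert (EDp : D * p = - X) by lra.
    replace ((xs ^ 2 + F ^ 2 - N * (xs * X + D * F)) * / (xs ^ 2 + F ^ 2)) with (D * a2 + 1) in H.
    - lra.
    - unfold a2. replace X with (- (D * p)) by lra. field. lra. }
  rewrite Heq in Htime.
  assert (0 <= u * (D * a1 + D * a2 + 2)) by nra.
  nra.
Qed.

Theorem proposition3p4 :
  forall (n : nat) (Rr : R), (2 <= n)%nat -> 1 < Rr ->
  forall upp : R -> R,
    (forall x, 1 <= x <= 6 * Rr -> 0 <= upp x /\ upp x < Rr) ->
  exists Y : R, forall y0 : R, y0 <= Y ->
  forall (f : R -> R -> R) (T : R),
    is_flow n (6 * Rr) upp f T ->
    (forall x, 1 <= x <= 6 * Rr -> ~ in_ball Rr (3 * Rr) y0 x (f 0 x)) ->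
    forall t, 0 <= t < T -> t < Rr / 4 ->
    forall x, 1 <= x <= 6 * Rr ->
      ~ in_ball (sqrt (Rr ^ 2 - 4 * Rr * t)) (3 * Rr) y0 x (f t x).
Proof.
  intros n Rr Hn HR upp Hupp.
  exists (- ((INR n - 1) * (6 * Rr ^ 2 + Rr) + 1 + Rr)).
  intros y0 Hy0 f T Hflow Hinit t Ht Htr x Hx Hball.
  assert (HN : 1 <= INR n - 1).
  { apply le_INR in Hn. simpl in Hn. lra. }
  unfold in_ball in Hball. rewrite pow2_sqrt in Hball by nra.
  set (d := Rr ^ 2 - 4 * Rr * t - ((x - 3 * Rr) ^ 2 + (f t x - y0) ^ 2)).
  assert (Hd : 0 < d) by (unfold d; lra).
  set (eps := d / (2 * (t + 1))).
  assert (Heps : 0 < eps) by (unfold eps; apply Rdiv_lt_0_compat; lra).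
  assert (E : eps * (t + 1) = d / 2) by (unfold eps; field; lra).
  pose proof (key n Rr upp y0 f T eps HR HN Hupp Hy0 Hflow Hinit Heps t x Ht Hx).
  unfold d in E. nra.
Qed.
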